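(* Let $\eta>0$, $y>0$, $\tilde x>0$, set $k=\eta\tilde x$ and $\eta_c=\frac{1}{\tilde x y}$, and let $M(\Delta f)=\Delta f\left(1-2k(\Delta f+y)+k^2\Delta f(\Delta f+y)\right)$. The fixed points of $M$ are $0$, $-y$, $2/k$. The remaining six solutions of $M(M(\Delta f))=\Delta f$ are $$\Delta f=\frac{k(1-ky)\pm\sqrt{k^2(ky-1)(ky+3)}}{2k^2}$$ and four further roots whose expression involves $h=\sqrt{-7+ky(2+ky)}$, which are non-real when $ky<2\sqrt2-1$. In particular, the two points $\frac{k(1-ky)\pm\sqrt{k^2(ky-1)(ky+3)}}{2k^2}$ form a real period-two orbit of $M$ consisting of two distinct points if and only if $\eta>\eta_c$, and $M$ has no real period-two orbit when $\eta\le\eta_c$.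
   Context: $\tilde x=\|\bm x\|/\sqrt{n_{\mathrm{eff}}}$. The map $M$ is the restriction of the UV model's function-space gradient descent dynamics to the invariant EoS manifold $\lambda=2\tilde x(\Delta f+y)$, written in terms of the residual $\Delta f$. *)

(* Defs.v *)
From mathcomp Require Import all_boot all_order all_algebra.
From mathcomp Require Import all_classical all_reals.
Set Implicit Arguments. Unset Strict Implicit. Unset Printing Implicit Defensive.
Import Order.TTheory GRing.Theory Num.Theory.
Local Open Scope ring_scope.

Definition Mmap {R : realType} (k y d : R) : R :=
  d * (1 - 2 * k * (d + y) + k ^+ 2 * d * (d + y)).

Definition p2plus {R : realType} (k y : R) : R :=
  (k * (1 - k * y) + Num.sqrt (k ^+ 2 * (k * y - 1) * (k * y + 3))) / (2 * k ^+ 2).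
Definition p2minus {R : realType} (k y : R) : R :=
  (k * (1 - k * y) - Num.sqrt (k ^+ 2 * (k * y - 1) * (k * y + 3))) / (2 * k ^+ 2).

(* Main.v *)
Require Import Defs.
From mathcomp Require Import all_boot all_order all_algebra.
From mathcomp Require Import all_classical all_reals.
From mathcomp Require Import ring lra.
Import Order.TTheory GRing.Theory Num.Theory.
Local Open Scope ring_scope.

Section H.
Variable R : realType.
Implicit Types k y d : R.

Definition qq k y d : R := (k*d)^+2 + (k*y - 1)*(k*d) + 1 - k*y.
Definition TT k y d : R :=
  ((k*d)^+2 + (k*y - 3)/2 * (k*d) - (1 + k*y)/2)^+2
  + (7 - 2*(k*y) - (k*y)^+2)/4 * (k*d - 1)^+2.

Lemma MM_ident k y d : k != 0 ->
  k * (Mmap k y (Mmap k y d) - d) =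
  (k*d) * (k*d + k*y) * (k*d - 2) * qq k y d * TT k y d.
Proof. move=> k0; rewrite /Mmap /qq /TT; by field. Qed.

Lemma M_ident k y d : k != 0 ->
  Mmap k y d = ((k*d - 1) * qq k y d + 1 - k*y) / k - d.
Proof. move=> k0; rewrite /Mmap /qq; by field. Qed.

Lemma fix_ident k y d : Mmap k y d - d = k * d * (d + y) * (k * d - 2).
Proof. rewrite /Mmap; ring. Qed.

Lemma TT_pos k y d : 0 < k*y -> k*y < 2 * Num.sqrt 2 - 1 -> TT k y d != 0.
Proof.
move=> c0 c1.
have s2 : Num.sqrt 2 ^+ 2 = 2 :> R by rewrite sqr_sqrtr // ler0n.
have s0 : 0 <= Num.sqrt (2:R) by exact: sqrtr_ge0.
have D : 0 < 7 - 2*(k*y) - (k*y)^+2.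
  have : (k*y + 1)^+2 < (2 * Num.sqrt 2)^+2.
    rewrite ltr_pXn2r //; [lra| |]; rewrite qualifE /=; lra.
  rewrite exprMn s2; lra.
rewrite /TT; set A := (_ - _)^+2; set B := (k*d - 1).
apply/eqP => h.
have hA : 0 <= A by rewrite /A sqr_ge0.
have hB : 0 <= B^+2 by rewrite sqr_ge0.
have hB0 : B^+2 = 0 by nra.
have hA0 : A = 0 by nra.
move/eqP: hB0; rewrite sqrf_eq0 /B subr_eq0 => /eqP e.
move/eqP: hA0; rewrite /A sqrf_eq0 e => /eqP; lra.
Qed.

Lemma qq_sol k y d : 0 < k -> qq k y d = 0 ->
  0 <= k ^+ 2 * (k * y - 1) * (k * y + 3) /\ (d = p2plus k y \/ d = p2minus k y).
Proof.
move=> k0 hq.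
set D := k ^+ 2 * (k * y - 1) * (k * y + 3).
have e : (2*k^+2*d - k*(1-k*y))^+2 = D.
  rewrite /D; move: hq; rewrite /qq => hq.
  have -> : (2*k^+2*d - k*(1-k*y))^+2 = 4*k^+2*((k*d)^+2 + (k*y - 1)*(k*d) + 1 - k*y) + k ^+ 2 * (k * y - 1) * (k * y + 3) by ring.
  by rewrite hq mulr0 add0r.
have D0 : 0 <= D by rewrite -e sqr_ge0.
split=> //.
have k2 : 2 * k^+2 != 0 by apply: lt0r_neq0; nra.
have : (2*k^+2*d - k*(1-k*y))^+2 == Num.sqrt D ^+2 by rewrite sqr_sqrtr // e.
rewrite eqf_sqr => /orP[/eqP h|/eqP h]; [left|right];
  rewrite /p2plus /p2minus -/D -h; field; exact: lt0r_neq0.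
Qed.

Lemma qq_p k y : 0 < k -> 0 <= k ^+ 2 * (k * y - 1) * (k * y + 3) ->
  qq k y (p2plus k y) = 0 /\ qq k y (p2minus k y) = 0.
Proof.
move=> k0 D0.
have s2 := sqr_sqrtr D0.
have kn : k != 0 by apply: lt0r_neq0.
set s := Num.sqrt _ in s2.
have k4 : 4 * k^+2 != 0 by apply: lt0r_neq0; nra.
rewrite /qq /p2plus /p2minus -/s; split; apply: (@mulIf _ (4 * k^+2)) => //;
  rewrite mul0r.
- have -> : ((k * ((k * (1 - k * y) + s) / (2 * k ^+ 2))) ^+ 2 + (k * y - 1) * (k * ((k * (1 - k * y) + s) / (2 * k ^+ 2))) + 1 - k * y) * (4 * k ^+ 2) = s^+2 - k ^+ 2 * (k * y - 1) * (k * y + 3) by field.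
  by rewrite s2 subrr.
- have -> : ((k * ((k * (1 - k * y) - s) / (2 * k ^+ 2))) ^+ 2 + (k * y - 1) * (k * ((k * (1 - k * y) - s) / (2 * k ^+ 2))) + 1 - k * y) * (4 * k ^+ 2) = s^+2 - k ^+ 2 * (k * y - 1) * (k * y + 3) by field.
  by rewrite s2 subrr.
Qed.

End H.

Theorem mainTheorem9 (R : realType) (eta y xt : R) :
  0 < eta -> 0 < y -> 0 < xt ->
  let k := eta * xt in
  let eta_c := 1 / (xt * y) in
  let M := Mmap k y in
  (* fixed points *)
  (forall d : R, M d = d <-> [\/ d = 0, d = - y | d = 2 / k]) /\
  (* the two explicit roots solve M(M d) = d whenever they are real *)
  (0 <= k ^+ 2 * (k * y - 1) * (k * y + 3) ->
     M (M (p2plus k y)) = p2plus k y /\ M (M (p2minus k y)) = p2minus k y) /\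
  (* the four further roots are non-real when ky < 2 sqrt 2 - 1 *)
  (k * y < 2 * Num.sqrt 2 - 1 ->
     forall d : R, M (M d) = d ->
       [\/ d = 0, d = - y, d = 2 / k | d = p2plus k y \/ d = p2minus k y]) /\
  (* real period-two orbit of two distinct points iff eta > eta_c *)
  ((0 <= k ^+ 2 * (k * y - 1) * (k * y + 3) /\ p2plus k y <> p2minus k y /\
    M (p2plus k y) = p2minus k y /\ M (p2minus k y) = p2plus k y)
     <-> eta_c < eta) /\
  (* no real period-two orbit when eta <= eta_c *)
  (eta <= eta_c -> ~ (exists a b : R, a <> b /\ M a = b /\ M b = a)).
Proof.
move=> he hy hx k eta_c M.
have k0 : 0 < k by rewrite /k mulr_gt0.
have kn : k != 0 by apply: lt0r_neq0.
have c0 : 0 < k * y by rewrite mulr_gt0.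
have ec : eta_c < eta <-> 1 < k * y.
  rewrite /eta_c /k ltr_pdivrMr ?mulr_gt0 // mulrA; by [].
clearbody k eta_c.
have s2gt : 1 < 2 * Num.sqrt 2 - 1 :> R.
  have s2 : Num.sqrt (2:R) ^+ 2 = 2 by rewrite sqr_sqrtr // ler0n.
  have := sqrtr_ge0 (2:R).
  nra.
have P3 : k * y < 2 * Num.sqrt 2 - 1 ->
     forall d : R, M (M d) = d ->
       [\/ d = 0, d = - y, d = 2 / k | d = p2plus k y \/ d = p2minus k y].
  move=> hc d hd.
  rewrite /M in hd; have := (@MM_ident R k y d kn); rewrite hd subrr mulr0 => /esym/eqP.
  rewrite !mulf_eq0 (negbTE ((@TT_pos R k y d c0 hc))) orbF (negbTE kn) /=.
  case/orP=> [/orP[/orP[|]|]|] /eqP h.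
  - by constructor 1.
  - constructor 2; apply: (mulfI kn); lra.
  - constructor 3; apply: (mulfI kn); rewrite mulrCA divff // mulr1; lra.
  - by constructor 4; case: ((@qq_sol R k y d k0 h)).
have Pfix : forall d : R, M d = d <-> [\/ d = 0, d = - y | d = 2 / k].
  move=> d; split.
  - move/eqP; rewrite -subr_eq0 /M fix_ident !mulf_eq0 (negbTE kn) /=.
    case/orP=> [/orP[]|] /eqP h.
    + by constructor 1.
    + constructor 2; lra.
    + constructor 3; apply: (mulfI kn); rewrite mulrCA divff // mulr1; lra.
  - move=> H; apply/eqP; rewrite -subr_eq0 /M fix_ident; apply/eqP.
    case: H => [->|->|->].
    + ring.
    + ring.
    + by rewrite mulrCA divff // mulr1 subrr mulr0.
have P2 : 0 <= k ^+ 2 * (k * y - 1) * (k * y + 3) ->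
     M (M (p2plus k y)) = p2plus k y /\ M (M (p2minus k y)) = p2minus k y.
  move=> D0; case: ((@qq_p R k y k0 D0)) => h1 h2.
  by split; apply/eqP; rewrite -subr_eq0 -(mulrI_eq0 _ (lregP kn)) /M MM_ident // ?h1 ?h2 !mulr0 mul0r.
have Mq : forall d : R, qq R k y d = 0 -> M d = (1 - k * y) / k - d.
  move=> d h; rewrite /M (@M_ident R k y d kn) h mulr0 add0r; congr (_ / _ - _); ring.
have sum : p2plus k y + p2minus k y = (1 - k * y) / k.
  rewrite /p2plus /p2minus; field; exact: kn.
have Dneg : k * y <= 1 -> p2plus k y = p2minus k y.
  move=> c1; have : k ^+ 2 * (k * y - 1) * (k * y + 3) <= 0.
    apply: mulr_le0_ge0; last lra.
    apply: mulr_ge0_le0; [exact: sqr_ge0 | lra].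
  move/ler0_sqrtr => hs; by rewrite /p2plus /p2minus hs addr0 subr0.
split; first exact: Pfix.
split; first exact: P2.
split; first exact: P3.
split.
  split.
  - case=> D0 [hne _]; apply/ec.
    rewrite ltNge; apply/negP => c1; exact: hne (Dneg c1).
  - move/ec => c1.
    have D0 : 0 < k ^+ 2 * (k * y - 1) * (k * y + 3).
      apply: mulr_gt0; [apply: mulr_gt0; [exact: exprn_gt0 | lra] | lra].
    have sp : 0 < Num.sqrt (k ^+ 2 * (k * y - 1) * (k * y + 3)) by rewrite sqrtr_gt0.
    case: ((@qq_p R k y k0 (ltW D0))) => h1 h2.
    split; first exact: ltW.
    split.
      have e : p2plus k y - p2minus k y = Num.sqrt (k ^+ 2 * (k * y - 1) * (k * y + 3)) / k^+2.
        rewrite /p2plus /p2minus; field; exact: kn.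
      move=> h; move: e; rewrite h subrr => /esym/eqP.
      rewrite mulf_eq0 invr_eq0 sqrtr_eq0 expf_eq0 (negbTE kn) andbF orbF => hle; lra.
    split.
    + rewrite (Mq _ h1); lra.
    + rewrite (Mq _ h2); lra.
move=> hle [a [b [hab [ha hb]]]].
have c1 : k * y <= 1.
  rewrite leNgt; apply/negP => /ec; rewrite ltNge hle //.
have hc : k * y < 2 * Num.sqrt 2 - 1 by lra.
have nf : forall z, M z <> z -> M (M z) = z -> z = p2plus k y.
  move=> z nz hz; case: (P3 hc z hz) => h.
  - by exfalso; apply: nz; apply/Pfix; constructor 1.
  - by exfalso; apply: nz; apply/Pfix; constructor 2.
  - by exfalso; apply: nz; apply/Pfix; constructor 3.
  - by case: h => // ->; rewrite Dneg.
have ea : a = p2plus k y.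
  apply: nf; first by rewrite ha => /esym.
  by rewrite ha.
have eb : b = p2plus k y.
  apply: nf; first by rewrite hb.
  by rewrite hb.
by apply: hab; rewrite ea eb.
Qed.
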